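(* Let $c\ge 0$, $b>0$, $q(x)=c/x^2$, and consider the eigenvalue problem $$-u''+q(x)u=\lambda u,\quad x\in(0,b),\qquad u(0)=u(b)=0 .$$ Let $\lambda_j$ be its eigenvalues and $u_j$ corresponding eigenfunctions normalized by $\int_0^b u_j^2\,dx=1$, and set $J_j(b)=u_j'(b)^2/\lambda_j$. Then $$J_j(b)=\frac{2}{b},\qquad j=1,2,\dots .$$ *)

(* Defs.v *)
From Stdlib Require Import Reals.
From Coquelicot Require Import Coquelicot.
Open Scope R_scope.

Definition q_inv_sq (c x : R) : R := c / (x ^ 2).

(* (lam, u) is a (classical) eigenpair of
     -u'' + (c/x^2) u = lam u  on (0,b),   u(0) = u(b) = 0,
   with u continuous on [0,b] (continuity at 0 from the right),
   twice differentiable on (0,b), differentiable at b (so u'(b) exists),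
   normalized by  int_0^b u^2 = 1  (which also forces u <> 0). *)
Definition dirichlet_eigenpair (c b lam : R) (u : R -> R) : Prop :=
  (forall x, 0 < x < b -> ex_derive u x /\ ex_derive (Derive u) x) /\
  (forall x, 0 < x < b ->
      - Derive_n u 2 x + q_inv_sq c x * u x = lam * u x) /\
  ex_derive u b /\
  filterlim u (at_right 0) (locally 0) /\
  u 0 = 0 /\ u b = 0 /\
  RInt (fun x => (u x) ^ 2) 0 b = 1.

Definition J_functional (lam : R) (u : R -> R) (b : R) : R :=
  (Derive u b) ^ 2 / lam.

(* Main.v *)
Require Import Defs.
From Stdlib Require Import Reals Lra.
From Coquelicot Require Import Coquelicot.
Open Scope R_scope.

Lemma mvt (f df : R -> R) a b : a < b ->
  (forall x, a <= x <= b -> is_derive f x (df x)) ->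
  exists c, a < c < b /\ f b - f a = df c * (b - a).
Proof.
  intros Hab Hd. destruct (MVT_cor2 f df a b Hab) as [c [H1 H2]].
  - intros x Hx. apply is_derive_Reals. auto.
  - exists c; split; auto.
Qed.

Lemma mono_le (f df : R -> R) a b :
  (forall x, a < x < b -> is_derive f x (df x)) ->
  (forall x, a < x < b -> 0 <= df x) ->
  forall x y, a < x -> x <= y -> y < b -> f x <= f y.
Proof.
  intros Hd Hp x y Hx Hxy Hy.
  destruct (Req_dec x y) as [->|Hne]; [lra|].
  destruct (mvt f df x y) as [c [Hc Heq]]; [lra| |].
  - intros z Hz; apply Hd; lra.
  - assert (0 <= df c) by (apply Hp; lra). nra.
Qed.

Lemma cont_eps (f : R -> R) x : ex_derive f x ->
  forall eps, 0 < eps -> exists d, 0 < d /\ forall y, Rabs (y - x) < d -> Rabs (f y - f x) < eps.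
Proof.
  intros [l Hl] eps He.
  apply is_derive_Reals in Hl.
  assert (Hc : continuity_pt f x).
  { apply derivable_continuous_pt. exists l. exact Hl. }
  destruct (Hc eps He) as [d [Hd Hd']].
  exists d; split; auto. intros y Hy.
  destruct (Req_dec y x) as [->|Hne].
  - rewrite Rminus_eq_0, Rabs_R0; auto.
  - apply (Hd' y). split; [split; [exact I| auto]| exact Hy].
Qed.

Lemma lim_left_of (f : R -> R) b l :
  (forall eps, 0 < eps -> exists d, 0 < d /\ forall x, b - d < x < b -> Rabs (f x - l) < eps) ->
  filterlim f (at_left b) (locally l).
Proof.
  intros H. apply filterlim_locally. intros eps.
  destruct (H eps (cond_pos eps)) as [d [Hd Hd']].
  exists (mkposreal d Hd). intros y Hy Hyb. apply Hd'.
  unfold ball in Hy; simpl in Hy; unfold AbsRing_ball, abs, minus, plus, opp in Hy; simpl in Hy.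
  apply Rabs_def2 in Hy. lra.
Qed.

Lemma lim_left_to (f : R -> R) b l :
  filterlim f (at_left b) (locally l) ->
  (forall eps, 0 < eps -> exists d, 0 < d /\ forall x, b - d < x < b -> Rabs (f x - l) < eps).
Proof.
  intros H eps He. apply filterlim_locally with (eps := mkposreal eps He) in H.
  destruct H as [d Hd]. exists d; split; [apply cond_pos|].
  intros x Hx. specialize (Hd x). 
  assert (Hb : ball b d x).
  { unfold ball; simpl; unfold AbsRing_ball, abs, minus, plus, opp; simpl.
    apply Rabs_def1; lra. }
  specialize (Hd Hb ltac:(lra)).
  unfold ball in Hd; simpl in Hd; unfold AbsRing_ball, abs, minus, plus, opp in Hd; simpl in Hd.
  exact Hd.
Qed.

Lemma lim_plus {T} {F} {FF : Filter F} (f g : T -> R) a b :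
  filterlim f F (locally a) -> filterlim g F (locally b) ->
  filterlim (fun x => f x + g x) F (locally (a + b)).
Proof.
  intros Hf Hg. eapply filterlim_comp_2; [exact Hf| exact Hg|].
  exact (@filterlim_plus R_AbsRing R_NormedModule a b).
Qed.

Lemma lim_mult {T} {F} {FF : Filter F} (f g : T -> R) a b :
  filterlim f F (locally a) -> filterlim g F (locally b) ->
  filterlim (fun x => f x * g x) F (locally (a * b)).
Proof.
  intros Hf Hg. eapply filterlim_comp_2; [exact Hf| exact Hg|].
  exact (@filterlim_mult R_AbsRing a b).
Qed.

Lemma lim_eq {T} {F} (f : T -> R) (a b : R) : filterlim f F (locally a) -> a = b -> filterlim f F (locally b).
Proof. intros H <-; exact H. Qed.

Lemma lim_right_to (f : R -> R) l :
  filterlim f (at_right 0) (locally l) ->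
  (forall eps, 0 < eps -> exists d, 0 < d /\ forall x, 0 < x < d -> Rabs (f x - l) < eps).
Proof.
  intros H eps He. apply filterlim_locally with (eps := mkposreal eps He) in H.
  destruct H as [d Hd]. exists d; split; [apply cond_pos|].
  intros x Hx. specialize (Hd x). 
  assert (Hb : ball 0 d x).
  { unfold ball; simpl; unfold AbsRing_ball, abs, minus, plus, opp; simpl.
    apply Rabs_def1; lra. }
  specialize (Hd Hb ltac:(lra)).
  unfold ball in Hd; simpl in Hd; unfold AbsRing_ball, abs, minus, plus, opp in Hd; simpl in Hd.
  exact Hd.
Qed.

Definition good c b lam (u : R -> R) :=
 0 <= c /\ 0 < b /\
 (forall x, 0<x<b -> is_derive u x (Derive u x)) /\
 (forall x, 0<x<b -> is_derive (Derive u) x ((c/x^2 - lam) * u x)) /\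
 is_derive u b (Derive u b) /\
 (forall eps, 0<eps -> exists d, 0<d /\ forall x, 0<x<d -> Rabs (u x) < eps) /\
 u 0 = 0 /\ u b = 0 /\ RInt (fun x => (u x)^2) 0 b = 1.

Lemma good_of c b lam u : 0 <= c -> 0 < b -> dirichlet_eigenpair c b lam u -> good c b lam u.
Proof.
  intros Hc Hb [Hd [Heq [Hdb [Hl [H0 [Hb0 Hi]]]]]].
  split; [auto|]. split; [auto|]. split; [|split; [|split; [|split; [|split; [auto|split; auto]]]]].
  - intros x Hx. apply Derive_correct. apply Hd; auto.
  - intros x Hx. replace ((c / x ^ 2 - lam) * u x) with (Derive (Derive u) x).
    + apply Derive_correct. apply Hd; auto.
    + specialize (Heq x Hx). unfold q_inv_sq in Heq. change (Derive_n u 2 x) with (Derive (Derive u) x) in Heq.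
      lra.
  - apply Derive_correct; auto.
  - intros eps He. destruct (lim_right_to u 0 Hl eps He) as [d [Hd0 Hd1]].
    exists d; split; auto. intros x Hx. specialize (Hd1 x Hx). rewrite Rminus_0_r in Hd1. auto.
Qed.

Lemma pbound c lam b t : 0 <= c -> 0 < b -> b / 2 <= t ->
  Rabs (c / t ^ 2 - lam) <= 4 * c / b ^ 2 + Rabs lam.
Proof.
  intros Hc Hb Ht.
  assert (Hct : 0 <= c / t ^ 2) by (apply Rle_mult_inv_pos; [lra| apply pow_lt; lra]).
  assert (c / t ^ 2 <= 4 * c / b ^ 2).
  { replace (4 * c / b^2) with (c * / ((b/2)^2)) by (field; lra).
    unfold Rdiv. apply Rmult_le_compat_l; [lra|].
    apply Rinv_le_contravar; [apply pow_lt; lra|]. apply pow_incr; lra. }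
  eapply Rle_trans; [apply Rabs_triang|]. rewrite Rabs_Ropp, Rabs_pos_eq; lra.
Qed.

Lemma dlim_b c b lam u : good c b lam u -> forall eps, 0<eps -> exists d, 0<d /\
  forall x, b-d<x<b -> Rabs (Derive u x - Derive u b) < eps.
Proof.
  intros [Hc [Hb [Hd [Hd2 [Hdb [Hl [H0 [Hub Hi]]]]]]]] eps He.
  destruct (cont_eps u b (ex_intro _ _ Hdb) 1 Rlt_0_1) as [d1 [Hd1 Hd1']].
  set (M := 4 * c / b ^ 2 + Rabs lam).
  assert (HM0 : 0 <= M).
  { unfold M. assert (0 <= 4 * c / b^2) by (apply Rle_mult_inv_pos; [lra| apply pow_lt; lra]).
    pose proof (Rabs_pos lam). lra. }
  assert (Hbnd : forall t, b - Rmin d1 (b/2) < t < b -> Rabs ((c / t^2 - lam) * u t) <= M).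
  { intros t Ht. rewrite Rabs_mult.
    assert (Rabs (u t) <= 1).
    { assert (Rabs (t - b) < d1).
      { apply Rabs_def1; pose proof (Rmin_l d1 (b/2)); lra. }
      specialize (Hd1' t H). rewrite Hub, Rminus_0_r in Hd1'. lra. }
    pose proof (pbound c lam b t Hc Hb ltac:(pose proof (Rmin_r d1 (b/2)); lra)).
    fold M in H1. replace M with (M * 1) by ring.
    apply Rmult_le_compat; auto; apply Rabs_pos. }
  pose proof Hdb as Hdr. apply is_derive_Reals in Hdr.
  destruct (Hdr (eps/2) ltac:(lra)) as [del Hdel].
  set (d := Rmin (Rmin d1 (b/2)) (Rmin del (eps / (2 * (M + 1))))).
  assert (Hdpos : 0 < d).
  { unfold d. repeat apply Rmin_pos; try lra. apply cond_pos.
    apply Rdiv_lt_0_compat; lra. }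
  exists d; split; auto.
  intros x Hx.
  assert (Hd_1 : d <= Rmin d1 (b/2)) by apply Rmin_l.
  assert (Hd_2 : d <= del) by (unfold d; eapply Rle_trans; [apply Rmin_r| apply Rmin_l]).
  assert (Hd_3 : d <= eps / (2 * (M + 1))) by (unfold d; eapply Rle_trans; [apply Rmin_r| apply Rmin_r]).
  assert (Hb2 : Rmin d1 (b/2) <= b/2) by apply Rmin_r.
  assert (Hq := Hdel (x - b) ltac:(lra) ltac:(rewrite Rabs_left; lra)).
  replace (b + (x - b)) with x in Hq by ring.
  destruct (mvt u (Derive u) x b) as [xi [Hxi Hxieq]]; [lra| |].
  { intros z Hz. destruct (Req_dec z b) as [->|Hne]; auto. apply Hd; lra. }
  destruct (mvt (Derive u) (fun t => (c / t^2 - lam) * u t) x xi) as [eta [Heta Hetaeq]]; [lra| |].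
  { intros z Hz. apply Hd2; lra. }
  assert (Hq' : (u x - u b) / (x - b) = Derive u xi) by (field_simplify_eq; [lra| lra]).
  rewrite Hq' in Hq.
  assert (Hbe := Hbnd eta ltac:(lra)).
  assert (Rabs (Derive u xi - Derive u x) <= M * (b - x)).
  { rewrite Hetaeq, Rabs_mult. rewrite (Rabs_pos_eq (xi - x)) by lra.
    apply Rle_trans with (M * (xi - x)); [apply Rmult_le_compat_r; lra| apply Rmult_le_compat_l; lra]. }
  assert (M * (b - x) <= eps / 2).
  { apply Rle_trans with (M * (eps / (2 * (M + 1)))).
    - apply Rmult_le_compat_l; lra.
    - unfold Rdiv. rewrite Rinv_mult. 
      assert (0 < / (M+1)) by (apply Rinv_0_lt_compat; lra).
      assert (M * / (M + 1) <= 1).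
      { apply Rmult_le_reg_r with (M+1); [lra|]. rewrite Rmult_assoc, Rinv_l by lra. lra. }
      replace (M * (eps * (/ 2 * / (M + 1)))) with ((M * / (M+1)) * (eps * / 2)) by ring.
      replace (eps * / 2) with (1 * (eps * / 2)) at 2 by ring.
      apply Rmult_le_compat_r; lra. }
  replace (Derive u x - Derive u b) with (-(Derive u xi - Derive u x) + (Derive u xi - Derive u b)) by ring.
  eapply Rle_lt_trans; [apply Rabs_triang|]. rewrite Rabs_Ropp. lra.
Qed.

Lemma is_derive_mult_R (f g : R -> R) x df dg : is_derive f x df -> is_derive g x dg ->
  is_derive (fun t => f t * g t) x (df * g x + f x * dg).
Proof.
  intros Hf Hg. apply (is_derive_mult f g x df dg Hf Hg). intros; apply Rmult_comm.
Qed.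

Lemma w_deriv c b lam u : good c b lam u -> forall x, 0 < x < b ->
  is_derive (fun t => u t * Derive u t) x (Derive u x * Derive u x + u x * ((c / x^2 - lam) * u x)).
Proof.
  intros [Hc [Hb [Hd [Hd2 _]]]] x Hx. apply is_derive_mult_R; auto.
Qed.

Lemma w_mono c b lam u : good c b lam u -> forall d, d <= b ->
  (forall x, 0 < x < d -> 0 <= c / x^2 - lam) ->
  forall x y, 0 < x -> x <= y -> y < d -> u x * Derive u x <= u y * Derive u y.
Proof.
  intros G d Hdb Hp. 
  apply (mono_le (fun t => u t * Derive u t) (fun x => Derive u x * Derive u x + u x * ((c / x^2 - lam) * u x)) 0 d).
  - intros x Hx. apply (w_deriv c b lam u G); lra.
  - intros x Hx. specialize (Hp x Hx).
    assert (0 <= Derive u x * Derive u x) by nra.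
    assert (0 <= (c / x^2 - lam) * (u x * u x)) by (apply Rmult_le_pos; nra).
    nra.
Qed.

Lemma w_nonneg c b lam u : good c b lam u -> forall d, 0 < d <= b ->
  (forall x, 0 < x < d -> 0 <= c / x^2 - lam) ->
  forall x, 0 < x < d -> 0 <= u x * Derive u x.
Proof.
  intros G d Hd Hp x0 Hx0.
  pose proof (w_mono c b lam u G d ltac:(lra) Hp) as Hm.
  destruct G as [Hc [Hb [Hdu [Hd2 [Hdb [Hl [H0 [Hub Hi]]]]]]]].
  destruct (Rle_or_lt 0 (u x0 * Derive u x0)) as [Hok|Hneg]; auto.
  exfalso. set (m := - (u x0 * Derive u x0)).
  destruct (Hl (Rmin 1 (m * x0))) as [del [Hdel Hdel']].
  { apply Rmin_pos; [lra|]. unfold m; nra. }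
  set (t := Rmin del x0 / 2).
  assert (Ht : 0 < t <= x0 / 2).
  { unfold t. split. apply Rdiv_lt_0_compat; [apply Rmin_pos|]; lra.
    pose proof (Rmin_r del x0); lra. }
  assert (Htd : t < del) by (unfold t; pose proof (Rmin_l del x0); lra).
  specialize (Hdel' t ltac:(lra)).
  destruct (mvt (fun t => u t * u t) (fun z => Derive u z * u z + u z * Derive u z) t x0) as [xi [Hxi Hxieq]]; [lra| |].
  { intros z Hz. apply is_derive_mult_R; apply Hdu; lra. }
  assert (Hw : u xi * Derive u xi <= - m) by (unfold m; rewrite Ropp_involutive; apply Hm; lra).
  assert (Hut : u t * u t < m * x0).
  { pose proof (Rmin_l 1 (m * x0)). pose proof (Rmin_r 1 (m * x0)).
    assert (Hq : Rabs (u t) * Rabs (u t) <= 1 * Rabs (u t)) by (apply Rmult_le_compat_r; [apply Rabs_pos| lra]).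
    rewrite <- Rabs_mult in Hq. pose proof (Rle_abs (u t * u t)). lra. }
  assert (u x0 * u x0 >= 0) by nra.
  assert (m > 0) by (unfold m; lra).
  nra.
Qed.

Lemma p_pos_small c lam x : 0 < c -> 0 < x -> x < sqrt (c / (Rabs lam + 1)) -> 0 <= c / x^2 - lam.
Proof.
  intros Hc Hx Hxs.
  assert (Hk : 0 < c / (Rabs lam + 1)) by (apply Rdiv_lt_0_compat; [lra| pose proof (Rabs_pos lam); lra]).
  assert (Hx2 : x^2 < c / (Rabs lam + 1)).
  { rewrite <- (sqrt_sqrt (c / (Rabs lam + 1))) by lra. simpl. rewrite Rmult_1_r.
    apply Rmult_le_0_lt_compat; lra. }
  assert (Hl : lam <= Rabs lam) by apply Rle_abs.
  assert (Rabs lam + 1 < c / x^2).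
  { assert (0 < x^2) by (apply pow_lt; lra).
    apply Rmult_lt_reg_r with (x^2); auto. unfold Rdiv. rewrite Rmult_assoc, Rinv_l by lra.
    rewrite Rmult_1_r.
    apply Rmult_lt_reg_r with (/ (Rabs lam + 1)). apply Rinv_0_lt_compat; pose proof (Rabs_pos lam); lra.
    replace ((Rabs lam + 1) * x ^ 2 * / (Rabs lam + 1)) with (x^2) by (field; pose proof (Rabs_pos lam); lra).
    exact Hx2. }
  lra.
Qed.

Lemma dbound0 c b lam u : good c b lam u -> exists d B, 0 < d <= b /\
  forall x, 0 < x < d -> Rabs (Derive u x) <= B.
Proof.
  intros G. pose proof G as [Hc [Hb [Hdu [Hd2 [Hdb [Hl [H0 [Hub Hi]]]]]]]].
  destruct (Rle_lt_or_eq_dec 0 c Hc) as [Hcp|Hc0].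
  - set (d0 := Rmin b (sqrt (c / (Rabs lam + 1)))).
    assert (Hs : 0 < sqrt (c / (Rabs lam + 1))).
    { apply sqrt_lt_R0. apply Rdiv_lt_0_compat; [lra| pose proof (Rabs_pos lam); lra]. }
    assert (Hd0 : 0 < d0 <= b) by (unfold d0; split; [apply Rmin_pos; lra| apply Rmin_l]).
    assert (Hp : forall x, 0 < x < d0 -> 0 <= c / x^2 - lam).
    { intros x Hx. apply p_pos_small; try lra. pose proof (Rmin_r b (sqrt (c / (Rabs lam + 1)))). fold d0 in H. lra. }
    pose proof (w_nonneg c b lam u G d0 Hd0 Hp) as Hw.
    exists (d0/2), (Rabs (Derive u (d0/2))). split; [lra|].
    intros x Hx. apply Rsqr_le_abs_0. unfold Rsqr.
    apply (mono_le (fun t => Derive u t * Derive u t)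
      (fun t => (c / t^2 - lam) * u t * Derive u t + Derive u t * ((c / t^2 - lam) * u t)) 0 d0); try lra.
    + intros z Hz. apply is_derive_mult_R; apply Hd2; lra.
    + intros z Hz. specialize (Hw z Hz). specialize (Hp z Hz).
      assert (0 <= (c / z ^ 2 - lam) * (u z * Derive u z)) by (apply Rmult_le_pos; auto).
      nra.
  - subst c.
    destruct (Hl 1 Rlt_0_1) as [del [Hdel Hdel']].
    set (d := Rmin del b / 2).
    assert (Hd : 0 < d) by (unfold d; apply Rdiv_lt_0_compat; [apply Rmin_pos|]; lra).
    assert (Hdd : d < del /\ d < b) by (unfold d; pose proof (Rmin_l del b); pose proof (Rmin_r del b); lra).
    exists d, (Rabs (Derive u d) + Rabs lam * d). split; [lra|].
    intros x Hx.
    destruct (mvt (Derive u) (fun t => (0 / t^2 - lam) * u t) x d) as [eta [Heta Heq]]; [lra| |].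
    { intros z Hz. apply Hd2; lra. }
    assert (Rabs (Derive u d - Derive u x) <= Rabs lam * d).
    { rewrite Heq. unfold Rdiv. rewrite Rmult_0_l, Rminus_0_l, !Rabs_mult, Rabs_Ropp.
      rewrite (Rabs_pos_eq (d - x)) by lra.
      specialize (Hdel' eta ltac:(lra)).
      assert (0 <= Rabs lam) by apply Rabs_pos. assert (0 <= Rabs (u eta)) by apply Rabs_pos.
      assert (Rabs lam * Rabs (u eta) <= Rabs lam) by nra.
      assert (0 <= Rabs lam * Rabs (u eta)) by nra.
      nra. }
    pose proof (Rabs_triang (Derive u d) (- (Derive u d - Derive u x))) as Ht. rewrite Rabs_Ropp in Ht.
    replace (Derive u d + - (Derive u d - Derive u x)) with (Derive u x) in Ht by ring.
    lra.
Qed.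

Definition Hf c lam (u : R -> R) x :=
  x * Derive u x ^ 2 - u x * Derive u x - c * u x ^ 2 / x + lam * x * u x ^ 2.

Lemma Hderiv c b lam u : good c b lam u -> forall x, 0 < x < b ->
  is_derive (Hf c lam u) x (2 * lam * u x ^ 2).
Proof.
  intros [Hc [Hb [Hdu [Hd2 _]]]] x Hx.
  assert (E1 : Derive (Derive u) x = (c / x^2 - lam) * u x).
  { apply is_derive_unique. apply Hd2; auto. }
  assert (X1 : ex_derive u x) by (eexists; apply Hdu; auto).
  assert (X2 : ex_derive (Derive u) x) by (eexists; apply Hd2; auto).
  unfold Hf. auto_derive.
  - repeat split; auto. lra.
  - change (Derive (fun x0 : R => Derive u x0) x) with (Derive (Derive u) x).
    change (Derive (fun x0 : R => u x0) x) with (Derive u x).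
    rewrite E1. field. lra.
Qed.

Lemma ulin c b lam u : good c b lam u -> forall d B, 0 < d <= b ->
  (forall x, 0 < x < d -> Rabs (Derive u x) <= B) ->
  forall x, 0 < x < d -> Rabs (u x) <= B * x.
Proof.
  intros G d B Hd HB x Hx.
  pose proof G as [Hc [Hb [Hdu [Hd2 [Hdb [Hl [H0 [Hub Hi]]]]]]]].
  destruct (Rle_or_lt (Rabs (u x)) (B * x)) as [ok|Hbad]; auto. exfalso.
  destruct (Hl (Rabs (u x) - B * x)) as [del [Hdel Hdel']]; [lra|].
  set (t := Rmin del x / 2).
  assert (Ht : 0 < t < x) by (unfold t; pose proof (Rmin_r del x); split; [apply Rdiv_lt_0_compat; [apply Rmin_pos|]|]; lra).
  assert (Htd : t < del) by (unfold t; pose proof (Rmin_l del x); lra).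
  specialize (Hdel' t ltac:(lra)).
  destruct (mvt u (Derive u) t x) as [xi [Hxi Heq]]; [lra| |].
  { intros z Hz; apply Hdu; lra. }
  assert (HB0 := HB xi ltac:(lra)).
  assert (Rabs (u x - u t) <= B * x).
  { rewrite Heq, Rabs_mult, (Rabs_pos_eq (x - t)) by lra.
    assert (0 <= Rabs (Derive u xi)) by apply Rabs_pos. nra. }
  pose proof (Rabs_triang (u x - u t) (u t)) as Ht2.
  replace (u x - u t + u t) with (u x) in Ht2 by ring. lra.
Qed.

Lemma H0lim c b lam u : good c b lam u -> forall eps, 0 < eps -> exists d, 0 < d /\
  forall x, 0 < x < d -> Rabs (Hf c lam u x) < eps.
Proof.
  intros G eps He.
  destruct (dbound0 c b lam u G) as [d [B [Hd HB]]].
  pose proof (ulin c b lam u G d B Hd HB) as HL.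
  assert (HB0 : 0 <= B) by (pose proof (HB (d/2) ltac:(lra)); pose proof (Rabs_pos (Derive u (d/2))); lra).
  pose proof G as [Hc _].
  set (K := (2 + c + Rabs lam) * B^2 + 1).
  assert (HK : 1 <= K) by (unfold K; pose proof (Rabs_pos lam); assert (0 <= B^2) by (apply pow2_ge_0); nra).
  exists (Rmin (Rmin d 1) (eps / K)). split.
  { repeat apply Rmin_pos; try lra. apply Rdiv_lt_0_compat; lra. }
  intros x Hx.
  assert (Hx1 : x < d /\ x < 1 /\ x < eps / K).
  { pose proof (Rmin_l (Rmin d 1) (eps / K)); pose proof (Rmin_r (Rmin d 1) (eps / K));
    pose proof (Rmin_l d 1); pose proof (Rmin_r d 1); lra. }
  assert (Hv := HB x ltac:(lra)). assert (Ha := HL x ltac:(lra)).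
  set (a := u x) in *. set (v := Derive u x) in *.
  assert (Hv2 : v * v <= B * B).
  { assert (Rabs v * Rabs v = v * v) by (rewrite <- Rabs_mult; apply Rabs_pos_eq; nra).
    pose proof (Rabs_pos v). nra. }
  assert (Ha2 : a * a <= B * B * (x * x)).
  { replace (a * a) with (Rabs a * Rabs a) by (rewrite <- Rabs_mult; apply Rabs_pos_eq; nra).
    pose proof (Rabs_pos a). nra. }
  assert (Hav : Rabs (a * v) <= B * B * x).
  { rewrite Rabs_mult. pose proof (Rabs_pos a). pose proof (Rabs_pos v). nra. }
  set (s := a * a / x).
  assert (Hs : 0 <= s <= B * B * x).
  { unfold s. split. apply Rle_mult_inv_pos; nra.
    apply Rmult_le_reg_r with x; [lra|]. unfold Rdiv. rewrite Rmult_assoc, Rinv_l by lra. nra. }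
  assert (Hl : Rabs (lam * x * (a * a)) <= Rabs lam * B * B * x).
  { rewrite Rabs_mult, Rabs_mult. rewrite (Rabs_pos_eq x) by lra. rewrite (Rabs_pos_eq (a*a)) by nra.
    pose proof (Rabs_pos lam).
    assert (a * a <= B * B) by nra.
    assert (x * (a * a) <= x * (B * B)) by nra. nra. }
  assert (E : Hf c lam u x = x * (v * v) - a * v - c * s + lam * x * (a * a)).
  { unfold Hf, s, a, v. unfold Rdiv. ring. }
  rewrite E.
  assert (Hfin : Rabs (x * (v * v) - a * v - c * s + lam * x * (a * a)) <= K * x - x).
  { apply Rabs_le. apply Rabs_le_between in Hav. apply Rabs_le_between in Hl.
    assert (0 <= x * (v * v) <= x * (B * B)) by (split; nra).
    assert (0 <= c * s <= c * (B * B * x)) by (split; nra).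
    unfold K. simpl. nra. }
  assert (K * x < eps).
  { apply Rmult_lt_reg_r with (/ K). apply Rinv_0_lt_compat; lra.
    replace (K * x * / K) with x by (field; lra). lra. }
  lra.
Qed.

Lemma u_lim_b c b lam u : good c b lam u -> filterlim u (at_left b) (locally 0).
Proof.
  intros G. pose proof G as [Hc [Hb [Hdu [Hd2 [Hdb [Hl [H0 [Hub Hi]]]]]]]].
  apply lim_left_of. intros eps He.
  destruct (cont_eps u b (ex_intro _ _ Hdb) eps He) as [d [Hd Hd']].
  exists d; split; auto. intros x Hx. rewrite Rminus_0_r.
  replace (u x) with (u x - u b) by (rewrite Hub; ring). apply Hd'. apply Rabs_def1; lra.
Qed.

Lemma du_lim_b c b lam u : good c b lam u -> filterlim (Derive u) (at_left b) (locally (Derive u b)).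
Proof.
  intros G. apply lim_left_of. apply (dlim_b c b lam u G).
Qed.

Lemma id_lim_b b : filterlim (fun x => x) (at_left b) (locally b).
Proof.
  apply lim_left_of. intros eps He. exists eps; split; auto. intros x Hx. apply Rabs_def1; lra.
Qed.

Lemma inv_lim_b b : 0 < b -> filterlim (fun x => / x) (at_left b) (locally (/ b)).
Proof.
  intros Hb. eapply filterlim_comp; [apply id_lim_b|].
  apply (ex_derive_continuous Rinv). auto_derive. lra.
Qed.

Lemma const_lim {T} {F} {FF : Filter F} (k : R) : filterlim (fun _ : T => k) F (locally k).
Proof. apply filterlim_const. Qed.

Lemma Hlim_b c b lam u : good c b lam u ->
  filterlim (Hf c lam u) (at_left b) (locally (b * Derive u b ^ 2)).
Proof.
  intros G. pose proof G as [Hc [Hb _]].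
  pose proof (u_lim_b c b lam u G) as U.
  pose proof (du_lim_b c b lam u G) as D.
  pose proof (id_lim_b b) as I.
  pose proof (inv_lim_b b Hb) as V.
  apply filterlim_ext with (f := fun x =>
     x * (Derive u x * Derive u x) + (-1) * (u x * Derive u x) + (-1) * (c * (u x * u x) * / x)
     + lam * x * (u x * u x)).
  { intros x. unfold Hf. unfold Rdiv. ring. }
  eapply lim_eq.
  - repeat first [apply lim_plus | apply lim_mult | apply const_lim | exact U | exact D | exact I | exact V].
  - ring.
Qed.

Lemma exd_u c b lam u : good c b lam u -> forall z, 0 < z <= b -> ex_derive u z.
Proof.
  intros [Hc [Hb [Hdu [Hd2 [Hdb _]]]]] z Hz.
  destruct (Req_dec z b) as [->|Hne]; eexists; [exact Hdb| apply Hdu; lra].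
Qed.

Lemma cont_u2 c b lam u : good c b lam u -> forall z, 0 < z <= b ->
  continuous (fun t => u t ^ 2) z.
Proof.
  intros G z Hz. pose proof (exd_u c b lam u G z Hz).
  apply (ex_derive_continuous (fun t => u t ^ 2)). auto_derive. auto.
Qed.

Lemma exint_mid c b lam u : good c b lam u -> forall x y, 0 < x -> x <= y -> y <= b ->
  ex_RInt (fun t => u t ^ 2) x y.
Proof.
  intros G x y Hx Hxy Hy. apply (@ex_RInt_continuous R_CompleteNormedModule).
  rewrite Rmin_left, Rmax_right by lra. intros z Hz. apply (cont_u2 c b lam u G). lra.
Qed.

Lemma exint0 c b lam u : good c b lam u -> forall y, 0 < y <= b ->
  ex_RInt (fun t => u t ^ 2) 0 y.
Proof.
  intros G y Hy. pose proof G as [Hc [Hb [Hdu [Hd2 [Hdb [Hl [H0 [Hub Hi]]]]]]]].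
  set (v := fun t => if Rlt_dec 0 t then u t ^ 2 else 0).
  apply (@ex_RInt_ext R_NormedModule) with (f := v).
  { rewrite Rmin_left, Rmax_right by lra. intros t Ht. unfold v.
    destruct (Rlt_dec 0 t); [auto| lra]. }
  apply (@ex_RInt_continuous R_CompleteNormedModule). rewrite Rmin_left, Rmax_right by lra.
  intros z Hz. destruct (Req_dec z 0) as [->|Hne].
  - unfold continuous. apply filterlim_locally. intros eps.
    destruct (Hl (Rmin 1 eps)) as [d [Hd Hd']]. { apply Rmin_pos; [lra| apply cond_pos]. }
    exists (mkposreal d Hd). intros t Ht.
    unfold ball in Ht; simpl in Ht; unfold AbsRing_ball, abs, minus, plus, opp in Ht; simpl in Ht.
    unfold ball; simpl; unfold AbsRing_ball, abs, minus, plus, opp; simpl.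
    unfold v. destruct (Rlt_dec 0 0) as [r|_]; [lra|].
    destruct (Rlt_dec 0 t) as [Ht0|Ht0].
    + apply Rabs_def2 in Ht. specialize (Hd' t ltac:(lra)).
      pose proof (Rmin_l 1 eps). pose proof (Rmin_r 1 eps).
      rewrite Ropp_0, Rplus_0_r. rewrite <- RPow_abs. simpl. rewrite Rmult_1_r.
      pose proof (Rabs_pos (u t)). pose proof (cond_pos eps). nra.
    + rewrite Ropp_0, Rplus_0_r, Rabs_R0. apply cond_pos.
  - apply (@continuous_ext_loc R_UniformSpace R_UniformSpace) with (g := fun t => u t ^ 2).
    + exists (mkposreal z ltac:(lra)). intros t Ht.
      unfold ball in Ht; simpl in Ht; unfold AbsRing_ball, abs, minus, plus, opp in Ht; simpl in Ht.
      apply Rabs_def2 in Ht. unfold v. destruct (Rlt_dec 0 t); [auto| lra].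
    + apply (cont_u2 c b lam u G). lra.
Qed.

Lemma Hint c b lam u : good c b lam u -> forall x y, 0 < x < y -> y < b ->
  Hf c lam u y - Hf c lam u x = 2 * lam * RInt (fun t => u t ^ 2) x y.
Proof.
  intros G x y Hxy Hy.
  assert (I1 : is_RInt (fun t => 2 * lam * u t ^ 2) x y (minus (Hf c lam u y) (Hf c lam u x))).
  { apply (@is_RInt_derive R_CompleteNormedModule); rewrite Rmin_left, Rmax_right by lra.
    - intros z Hz. apply (Hderiv c b lam u G). lra.
    - intros z Hz. pose proof (exd_u c b lam u G z ltac:(lra)).
      apply (ex_derive_continuous (fun t => 2 * lam * u t ^ 2)). auto_derive. auto. }
  assert (I2 : is_RInt (fun t => scal (2 * lam) (u t ^ 2)) x y (scal (2 * lam) (RInt (fun t => u t ^ 2) x y))).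
  { apply (@is_RInt_scal R_NormedModule). apply (@RInt_correct R_CompleteNormedModule). apply (exint_mid c b lam u G); lra. }
  apply (@is_RInt_unique R_CompleteNormedModule) in I1. apply (@is_RInt_unique R_CompleteNormedModule) in I2.
  change (minus (Hf c lam u y) (Hf c lam u x)) with (Hf c lam u y - Hf c lam u x) in I1.
  rewrite <- I1. exact I2.
Qed.

Lemma int0_small c b lam u : good c b lam u -> exists d, 0 < d /\
  forall x, 0 < x < d -> Rabs (RInt (fun t => u t ^ 2) 0 x) <= x.
Proof.
  intros G. pose proof G as [Hc [Hb [Hdu [Hd2 [Hdb [Hl [H0 [Hub Hi]]]]]]]].
  destruct (Hl 1 Rlt_0_1) as [d [Hd Hd']].
  exists (Rmin d b). split; [apply Rmin_pos; lra|].
  intros x Hx. pose proof (Rmin_l d b). pose proof (Rmin_r d b).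
  replace x with ((x - 0) * 1) at 2 by ring.
  apply abs_RInt_le_const; [lra| apply (exint0 c b lam u G); lra|].
  intros t Ht. destruct (Req_dec t 0) as [->|Hne].
  - rewrite H0. simpl. rewrite Rmult_0_l, Rabs_R0. lra.
  - specialize (Hd' t ltac:(lra)). rewrite <- RPow_abs. simpl. rewrite Rmult_1_r.
    pose proof (Rabs_pos (u t)). nra.
Qed.

Lemma intb_small c b lam u : good c b lam u -> exists d, 0 < d /\
  forall y, b - d < y < b -> Rabs (RInt (fun t => u t ^ 2) y b) <= b - y.
Proof.
  intros G. pose proof G as [Hc [Hb [Hdu [Hd2 [Hdb [Hl [H0 [Hub Hi]]]]]]]].
  destruct (cont_eps u b (ex_intro _ _ Hdb) 1 Rlt_0_1) as [d [Hd Hd']].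
  exists (Rmin d (b/2)). split; [apply Rmin_pos; lra|].
  intros y Hy. pose proof (Rmin_l d (b/2)). pose proof (Rmin_r d (b/2)).
  replace (b - y) with ((b - y) * 1) by ring.
  apply abs_RInt_le_const; [lra| apply (exint_mid c b lam u G); lra|].
  intros t Ht. assert (Hu : Rabs (u t) < 1).
  { assert (Htb : Rabs (t - b) < d) by (apply Rabs_def1; lra).
    specialize (Hd' t Htb). rewrite Hub, Rminus_0_r in Hd'. auto. }
  rewrite <- RPow_abs. simpl. rewrite Rmult_1_r.
  pose proof (Rabs_pos (u t)). nra.
Qed.

Lemma key c b lam u : good c b lam u -> b * Derive u b ^ 2 = 2 * lam.
Proof.
  intros G. pose proof G as [Hc [Hb [Hdu [Hd2 [Hdb [Hl [H0 [Hub Hi]]]]]]]].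
  set (L := b * Derive u b ^ 2).
  assert (Heps : forall eps, 0 < eps -> Rabs (L - 2 * lam) < eps).
  { intros eps He.
    pose proof (Rabs_pos lam) as Hlp.
    set (eta := eps / (2 * Rabs lam + 3)).
    assert (Heta : 0 < eta) by (unfold eta; apply Rdiv_lt_0_compat; lra).
    assert (Heta2 : (2 + 2 * Rabs lam) * eta < eps).
    { unfold eta. apply Rmult_lt_reg_r with (2 * Rabs lam + 3); [lra|].
      unfold Rdiv. rewrite Rmult_assoc, (Rmult_assoc eps), Rinv_l by lra. nra. }
    destruct (H0lim c b lam u G eta Heta) as [d1 [Hd1 Hd1']].
    destruct (lim_left_to _ _ _ (Hlim_b c b lam u G) eta Heta) as [d2 [Hd2' Hd2'']].
    destruct (int0_small c b lam u G) as [d3 [Hd3 Hd3']].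
    destruct (intb_small c b lam u G) as [d4 [Hd4 Hd4']].
    set (x := Rmin (Rmin d1 d3) (Rmin eta (b/2)) / 2).
    set (y := b - Rmin (Rmin d2 d4) (Rmin eta (b/2)) / 2).
    assert (Hx : 0 < x /\ x < d1 /\ x < d3 /\ x <= eta / 2 /\ x <= b / 4).
    { unfold x. pose proof (Rmin_l (Rmin d1 d3) (Rmin eta (b/2))).
      pose proof (Rmin_r (Rmin d1 d3) (Rmin eta (b/2))).
      pose proof (Rmin_l d1 d3). pose proof (Rmin_r d1 d3).
      pose proof (Rmin_l eta (b/2)). pose proof (Rmin_r eta (b/2)).
      assert (0 < Rmin (Rmin d1 d3) (Rmin eta (b/2))) by (repeat apply Rmin_pos; lra).
      lra. }
    assert (Hy : y < b /\ b - d2 < y /\ b - d4 < y /\ b - y <= eta / 2 /\ 3 * b / 4 <= y).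
    { unfold y. pose proof (Rmin_l (Rmin d2 d4) (Rmin eta (b/2))).
      pose proof (Rmin_r (Rmin d2 d4) (Rmin eta (b/2))).
      pose proof (Rmin_l d2 d4). pose proof (Rmin_r d2 d4).
      pose proof (Rmin_l eta (b/2)). pose proof (Rmin_r eta (b/2)).
      assert (0 < Rmin (Rmin d2 d4) (Rmin eta (b/2))) by (repeat apply Rmin_pos; lra).
      lra. }
    assert (C1 : RInt (fun t => u t ^ 2) 0 x + RInt (fun t => u t ^ 2) x y = RInt (fun t => u t ^ 2) 0 y).
    { apply (@RInt_Chasles R_CompleteNormedModule).
      apply (exint0 c b lam u G); lra. apply (exint_mid c b lam u G); lra. }
    assert (C2 : RInt (fun t => u t ^ 2) 0 y + RInt (fun t => u t ^ 2) y b = RInt (fun t => u t ^ 2) 0 b).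
    { apply (@RInt_Chasles R_CompleteNormedModule).
      apply (exint0 c b lam u G); lra. apply (exint_mid c b lam u G); lra. }
    rewrite Hi in C2.
    pose proof (Hint c b lam u G x y ltac:(lra) ltac:(lra)) as HI.
    pose proof (Hd1' x ltac:(lra)) as B1.
    pose proof (Hd2'' y ltac:(lra)) as B2.
    pose proof (Hd3' x ltac:(lra)) as B3.
    pose proof (Hd4' y ltac:(lra)) as B4.
    set (A0 := RInt (fun t => u t ^ 2) 0 x) in *.
    set (Ab := RInt (fun t => u t ^ 2) y b) in *.
    set (Ixy := RInt (fun t => u t ^ 2) x y) in *.
    assert (B5 : Rabs (2 * lam * (A0 + Ab)) <= 2 * Rabs lam * eta).
    { rewrite Rabs_mult, Rabs_mult, Rabs_pos_eq by lra.
      assert (Rabs (A0 + Ab) <= eta) by (eapply Rle_trans; [apply Rabs_triang| lra]).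
      assert (0 <= Rabs (A0 + Ab)) by apply Rabs_pos. nra. }
    assert (E : L - 2 * lam = - (Hf c lam u y - L) + Hf c lam u x - 2 * lam * (A0 + Ab)).
    { assert (Hx' : Ixy = 1 - A0 - Ab) by lra. rewrite Hx' in HI.
      assert (HI' : Hf c lam u y = Hf c lam u x + 2 * lam * (1 - A0 - Ab)) by (rewrite <- HI; ring).
      rewrite HI'. ring. }
    rewrite E.
    apply Rabs_def2 in B1. apply Rabs_def2 in B2. apply Rabs_le_between in B5.
    unfold L in *. apply Rabs_def1; lra. }
  destruct (Req_dec L (2 * lam)) as [ok|Hne]; auto.
  exfalso. assert (0 < Rabs (L - 2 * lam)) by (apply Rabs_pos_lt; lra).
  specialize (Heps _ H). lra.
Qed.

Lemma sq_abs (a : R) : a * a = Rabs a * Rabs a.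
Proof. rewrite <- Rabs_mult. symmetry. apply Rabs_pos_eq. nra. Qed.

Lemma lam_nz c b lam u : good c b lam u -> lam <> 0.
Proof.
  intros G Hl0. subst lam.
  pose proof G as [Hc [Hb [Hdu [Hd2 [Hdb [Hl [H0 [Hub Hi]]]]]]]].
  assert (Hp : forall x, 0 < x < b -> 0 <= c / x^2 - 0).
  { intros x Hx. rewrite Rminus_0_r. apply Rle_mult_inv_pos; [lra| apply pow_lt; lra]. }
  pose proof (w_nonneg c b 0 u G b (conj Hb (Rle_refl b)) Hp) as Hw.
  pose proof (w_mono c b 0 u G b (Rle_refl b) Hp) as Hm.
  assert (Wz : forall x, 0 < x < b -> u x * Derive u x = 0).
  { intros x Hx. specialize (Hw x Hx).
    destruct (Req_dec (u x * Derive u x) 0) as [ok|Hne]; auto. exfalso.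
    set (m := u x * Derive u x). assert (Hmp : 0 < m) by (unfold m; lra).
    set (K := Rabs (Derive u b) + 1).
    assert (HK : 1 <= K) by (unfold K; pose proof (Rabs_pos (Derive u b)); lra).
    destruct (cont_eps u b (ex_intro _ _ Hdb) (m / K)) as [da [Hda Hda']].
    { apply Rdiv_lt_0_compat; lra. }
    destruct (dlim_b c b 0 u G 1 Rlt_0_1) as [db [Hdb0 Hdb']].
    set (y := b - Rmin (Rmin da db) (b - x) / 2).
    assert (Hy : x < y < b /\ b - db < y /\ Rabs (y - b) < da).
    { unfold y. pose proof (Rmin_l (Rmin da db) (b - x)). pose proof (Rmin_r (Rmin da db) (b - x)).
      pose proof (Rmin_l da db). pose proof (Rmin_r da db).
      assert (0 < Rmin (Rmin da db) (b - x)) by (repeat apply Rmin_pos; lra).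
      split; [lra| split; [lra|]]. apply Rabs_def1; lra. }
    specialize (Hda' y ltac:(tauto)). rewrite Hub, Rminus_0_r in Hda'.
    specialize (Hdb' y ltac:(lra)).
    assert (Hdy : Rabs (Derive u y) < K).
    { unfold K. pose proof (Rabs_triang (Derive u y - Derive u b) (Derive u b)).
      replace (Derive u y - Derive u b + Derive u b) with (Derive u y) in H by ring. lra. }
    assert (Hwy : u y * Derive u y < m).
    { eapply Rle_lt_trans; [apply Rle_abs|]. rewrite Rabs_mult.
      apply Rlt_le_trans with (m / K * K).
      - apply Rmult_le_0_lt_compat; try apply Rabs_pos; lra.
      - replace (m / K * K) with m by (field; lra). lra. }
    assert (m <= u y * Derive u y) by (unfold m; apply Hm; lra).
    lra. }
  assert (U0 : forall x, 0 < x < b -> u x = 0).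
  { intros x Hx. destruct (Req_dec (u x) 0) as [ok|Hne]; auto. exfalso.
    destruct (Hl (Rabs (u x))) as [d [Hd Hd']]; [apply Rabs_pos_lt; auto|].
    set (t := Rmin d x / 2).
    assert (Ht : 0 < t < x /\ t < d).
    { unfold t. pose proof (Rmin_l d x). pose proof (Rmin_r d x).
      assert (0 < Rmin d x) by (apply Rmin_pos; lra). lra. }
    specialize (Hd' t ltac:(lra)).
    destruct (mvt (fun t => u t * u t) (fun z => Derive u z * u z + u z * Derive u z) t x) as [xi [Hxi Heq]]; [lra| |].
    { intros z Hz. apply is_derive_mult_R; apply Hdu; lra. }
    assert (Wxi := Wz xi ltac:(lra)).
    replace (Derive u xi * u xi + u xi * Derive u xi) with (2 * (u xi * Derive u xi)) in Heq by ring.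
    rewrite Wxi in Heq. rewrite (sq_abs (u x)), (sq_abs (u t)) in Heq.
    pose proof (Rabs_pos (u t)). nra. }
  assert (Z : RInt (fun x => u x ^ 2) 0 b = 0).
  { rewrite (RInt_ext (V := R_CompleteNormedModule) _ (fun _ => 0)).
    - rewrite RInt_const. apply Rmult_0_r.
    - rewrite Rmin_left, Rmax_right by lra. intros t Ht. rewrite U0 by lra. simpl; ring. }
  lra.
Qed.

Theorem mainTheorem4 (c b lam : R) (u : R -> R) :
  0 <= c -> 0 < b ->
  dirichlet_eigenpair c b lam u ->
  J_functional lam u b = 2 / b.
Proof.
  intros Hc Hb He.
  pose proof (good_of c b lam u Hc Hb He) as G.
  pose proof (key c b lam u G) as K.
  pose proof (lam_nz c b lam u G) as N.
  unfold J_functional.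
  assert (Derive u b ^ 2 = 2 * lam / b) by (rewrite <- K; field; lra).
  rewrite H. field. lra.
Qed.
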